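(* Assume the linear setting of the context. The function $f(\phi)=\sum_{k=1}^N c_k^{\rm e}\big(\exp(-q_k-z_k\phi)-1\big)$, $\phi\in\mathbb R$, has a unique minimizer $\phi_{\min}$. If $f(\phi_{\min})<0$, the linear pump-leak system has exactly one steady state $(\mathbf c^*,v^*,\phi^* )\in(0,\infty)^N\times(0,\infty)\times\mathbb R$; if $f(\phi_{\min})\ge 0$, it has no steady state.
   Context: Fix an integer $N\ge2$, real valences $z_1,\dots,z_N$ not all zero, $\mathbf z=(z_1,\dots,z_N)^T$, positive constants $c_1^{\rm e},\dots,c_N^{\rm e}$ with $\sum_kz_kc_k^{\rm e}=0$, a constant $A>0$ and a real number $z$. Let $L$ be a real symmetric positive definite $N\times N$ matrix, $\mathbf p\in\mathbb R^N$ a constant vector, $\zeta>0$, and $\mathbf q=(q_1,\dots,q_N)^T=L^{-1}\mathbf p$. For $\mathbf c\in(0,\infty)^N$, $v>0$, $\phi\in\mathbb R$ set $\gamma_k=\ln(c_k/c_k^{\rm e})$, $\mu_k=\gamma_k+z_k\phi$, $\boldsymbol\mu=(\mu_1,\dots,\mu_N)^T$, $\pi_{\rm w}=\sum_kc_k^{\rm e}-(\sum_kc_k+A/v)$. The linear pump-leak system is $$\frac{d}{dt}(v\mathbf c)=-L\boldsymbol\mu-\mathbf p,\qquad 0=\sum_kz_kc_k+\frac{zA}{v},\qquad \frac{dv}{dt}=-\zeta\pi_{\rm w}.$$ A steady state is a point $(\mathbf c,v,\phi)\in(0,\infty)^N\times(0,\infty)\times\mathbb R$ with $\sum_kz_kc_k+zA/v=0$,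 $L\boldsymbol\mu+\mathbf p=0$ and $\pi_{\rm w}=0$. *)

(* Defs.v *)
From Stdlib Require Import Reals Lra Lia.
Open Scope R_scope.

(* rsum n f = f 0 + ... + f (n-1); indices 0..N-1 stand for species 1..N. *)
Fixpoint rsum (n : nat) (f : nat -> R) : R :=
  match n with
  | O => 0
  | S m => rsum m f + f m
  end.

Definition mu (ce zv c : nat -> R) (phi : R) (k : nat) : R :=
  ln (c k / ce k) + zv k * phi.

Definition pi_w (N : nat) (ce c : nat -> R) (A v : R) : R :=
  rsum N ce - (rsum N c + A / v).

Definition steady_state (N : nat) (zv ce : nat -> R) (A z : R)
    (L : nat -> nat -> R) (p : nat -> R)
    (c : nat -> R) (v phi : R) : Prop :=
  (forall k, (k < N)%nat -> 0 < c k) /\ 0 < v /\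
  rsum N (fun k => zv k * c k) + z * A / v = 0 /\
  (forall i, (i < N)%nat ->
     rsum N (fun j => L i j * mu ce zv c phi j) + p i = 0) /\
  pi_w N ce c A v = 0.

Definition f_lin (N : nat) (ce zv q : nat -> R) (phi : R) : R :=
  rsum N (fun k => ce k * (exp (- q k - zv k * phi) - 1)).

(* Main.v *)
Require Import Defs.
From Stdlib Require Import Reals Lra Lia Psatz Classical.
Open Scope R_scope.

Lemma rsum_ext n F G : (forall k, (k < n)%nat -> F k = G k) -> rsum n F = rsum n G.
Proof. induction n; intros H; simpl; auto. rewrite IHn by (intros; apply H; lia). rewrite H by lia. auto. Qed.

Lemma rsum_plus n F G : rsum n (fun k => F k + G k) = rsum n F + rsum n G.
Proof. induction n; simpl; [ring|rewrite IHn; ring]. Qed.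

Lemma rsum_scal n a F : rsum n (fun k => a * F k) = a * rsum n F.
Proof. induction n; simpl; [ring|rewrite IHn; ring]. Qed.

Lemma rsum_scal_r n a F : rsum n (fun k => F k * a) = rsum n F * a.
Proof. induction n; simpl; [ring|rewrite IHn; ring]. Qed.

Lemma rsum_opp n F : rsum n (fun k => - F k) = - rsum n F.
Proof. induction n; simpl; [ring|rewrite IHn; ring]. Qed.

Lemma rsum_minus n F G : rsum n (fun k => F k - G k) = rsum n F - rsum n G.
Proof. induction n; simpl; [ring|rewrite IHn; ring]. Qed.

Lemma rsum_le n F G : (forall k, (k < n)%nat -> F k <= G k) -> rsum n F <= rsum n G.
Proof. induction n; intros H; simpl; [lra|]. assert (H1 := H n ltac:(lia)).
 assert (rsum n F <= rsum n G) by (apply IHn; intros; apply H; lia). lra. Qed.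

Lemma rsum_le_strict n F G j : (forall k, (k < n)%nat -> F k <= G k) -> (j < n)%nat ->
  rsum n F + (G j - F j) <= rsum n G.
Proof. induction n; intros H Hj; simpl; [lia|].
 assert (H1 := H n ltac:(lia)).
 destruct (Nat.eq_dec j n) as [->|Hne].
 - assert (rsum n F <= rsum n G) by (apply rsum_le; intros; apply H; lia). lra.
 - assert (rsum n F + (G j - F j) <= rsum n G) by (apply IHn; [intros; apply H; lia|lia]). lra.
Qed.

Lemma rsum_cont n (F : nat -> R -> R) : (forall k, continuity (F k)) ->
  continuity (fun x => rsum n (fun k => F k x)).
Proof. intros H; induction n; simpl.
 - apply continuity_const. intros x y; auto.
 - exact (continuity_plus _ _ IHn (H n)). Qed.

Definition Dl N ce zv q phi := rsum N (fun k => - (ce k * zv k * exp (- q k - zv k * phi))).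

Lemma term_tangent c z a x0 x : 0 < c ->
  c * (exp (a - z * x0) - 1) + - (c * z * exp (a - z * x0)) * (x - x0)
  <= c * (exp (a - z * x) - 1)
 /\ (z * (x - x0) <> 0 -> c * (exp (a - z * x0) - 1) + - (c * z * exp (a - z * x0)) * (x - x0)
  < c * (exp (a - z * x) - 1)).
Proof. intros Hc.
 replace (a - z * x) with ((a - z * x0) + (- (z * (x - x0)))) by ring.
 rewrite exp_plus. set (e0 := exp (a - z*x0)). assert (0 < e0) by apply exp_pos.
 assert (0 < c * e0) by (apply Rmult_lt_0_compat; auto).
 split.
 - assert (H1 := exp_ineq1_le (- (z * (x - x0)))).
   assert (c*e0 * (1 + - (z * (x - x0))) <= c*e0 * exp (- (z * (x - x0)))) by (apply Rmult_le_compat_l; lra).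
   nra.
 - intros Hnz. assert (H1 := exp_ineq1 (- (z * (x - x0))) ltac:(lra)).
   assert (c*e0 * (1 + - (z * (x - x0))) < c*e0 * exp (- (z * (x - x0)))) by (apply Rmult_lt_compat_l; lra).
   nra.
Qed.

Lemma tangent_decomp N ce zv q x0 x :
  rsum N (fun k => ce k * (exp (- q k - zv k * x0) - 1) + - (ce k * zv k * exp (- q k - zv k * x0)) * (x - x0))
  = f_lin N ce zv q x0 + Dl N ce zv q x0 * (x - x0).
Proof. rewrite rsum_plus, rsum_scal_r. reflexivity. Qed.

Lemma tangent N ce zv q x0 x : (forall k, (k < N)%nat -> 0 < ce k) ->
  f_lin N ce zv q x0 + Dl N ce zv q x0 * (x - x0) <= f_lin N ce zv q x.
Proof. intros Hce. rewrite <- tangent_decomp. unfold f_lin. apply rsum_le.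
 intros k Hk. apply (term_tangent _ _ _ _ _ (Hce k Hk)). Qed.

Lemma tangent_strict N ce zv q x0 x j : (forall k, (k < N)%nat -> 0 < ce k) ->
  (j < N)%nat -> zv j <> 0 -> x <> x0 ->
  f_lin N ce zv q x0 + Dl N ce zv q x0 * (x - x0) < f_lin N ce zv q x.
Proof. intros Hce Hj Hz Hx. rewrite <- tangent_decomp. unfold f_lin.
 set (F := fun k => ce k * (exp (- q k - zv k * x0) - 1) + - (ce k * zv k * exp (- q k - zv k * x0)) * (x - x0)).
 set (G := fun k => ce k * (exp (- q k - zv k * x) - 1)).
 assert (Hle : forall k, (k < N)%nat -> F k <= G k).
 { intros k Hk. apply (term_tangent _ _ _ _ _ (Hce k Hk)). }
 assert (H1 := rsum_le_strict N F G j Hle Hj).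
 destruct (term_tangent (ce j) (zv j) (- q j) x0 x (Hce j Hj)) as [_ H2].
 assert (zv j * (x - x0) <> 0) by (apply Rmult_integral_contrapositive; split; lra).
 specialize (H2 H). unfold F, G in *. simpl in *. lra. Qed.

Lemma D_mono N ce zv q x y : (forall k, (k < N)%nat -> 0 < ce k) -> x < y ->
  Dl N ce zv q x <= Dl N ce zv q y.
Proof. intros Hce Hxy. assert (H1 := tangent N ce zv q x y Hce).
 assert (H2 := tangent N ce zv q y x Hce). nra. Qed.

Lemma f_cont N ce zv q : continuity (f_lin N ce zv q).
Proof. unfold f_lin. apply (rsum_cont N (fun k x => ce k * (exp (- q k - zv k * x) - 1))).
 intros k. reg. Qed.

Lemma D_cont N ce zv q : continuity (Dl N ce zv q).
Proof. unfold Dl. apply (rsum_cont N (fun k x => - (ce k * zv k * exp (- q k - zv k * x)))).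
 intros k. reg. Qed.

Lemma D_pos N ce zv q j : (forall k, (k < N)%nat -> 0 < ce k) -> (j < N)%nat -> zv j < 0 ->
  exists x, 0 < Dl N ce zv q x.
Proof. intros Hce Hj Hz.
 set (a := fun k => ce k * Rabs (zv k) * exp (- q k)).
 set (S := rsum N a).
 assert (HS : 0 <= S). { replace 0 with (rsum N (fun _ => 0)).
   2:{ clear. induction N; simpl; lra. }
   apply rsum_le. intros k Hk. unfold a. assert (0 < ce k) by auto.
   assert (0 < exp (- q k)) by apply exp_pos. assert (0 <= Rabs (zv k)) by apply Rabs_pos. 
   apply Rmult_le_pos; [apply Rmult_le_pos|]; lra. }
 set (b := ce j * (- zv j) * exp (- q j)).
 assert (Hb : 0 < b). { unfold b. assert (0 < ce j) by auto. assert (0 < exp (- q j)) by apply exp_pos.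
   apply Rmult_lt_0_compat; [apply Rmult_lt_0_compat|]; lra. }
 exists ((S + 1) / (b * (- zv j))).
 set (x := (S + 1) / (b * (- zv j))).
 assert (Hx : b * (- zv j) * x = S + 1) by (unfold x; field; lra).
 assert (Hx0 : 0 <= x). { unfold x. apply Rlt_le, Rdiv_lt_0_compat; [lra|]. nra. }
 assert (Hbound : forall k, (k < N)%nat -> - a k <= - (ce k * zv k * exp (- q k - zv k * x))).
 { intros k Hk. unfold a. assert (0 < ce k) by auto. assert (0 < exp (- q k - zv k * x)) by apply exp_pos.
   destruct (Rle_lt_dec (zv k) 0) as [Hzk|Hzk].
   - assert (0 <= ce k * Rabs (zv k) * exp (- q k)). { assert (0 < exp (- q k)) by apply exp_pos. 
       assert (0 <= Rabs (zv k)) by apply Rabs_pos. apply Rmult_le_pos; [apply Rmult_le_pos|]; lra. }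
     assert (ce k * zv k * exp (- q k - zv k * x) <= 0).
     { assert (0 <= ce k * (- zv k) * exp (- q k - zv k * x)) by (apply Rmult_le_pos; [apply Rmult_le_pos|]; lra). nra. }
     lra.
   - rewrite Rabs_pos_eq by lra.
     assert (exp (- q k - zv k * x) <= exp (- q k)).
     { destruct (Req_dec x 0) as [->|Hx1]. { replace (- q k - zv k * 0) with (- q k) by ring. lra. }
       apply Rlt_le, exp_increasing. nra. }
     assert (0 < ce k * zv k) by nra.
     assert (ce k * zv k * exp (- q k - zv k * x) <= ce k * zv k * exp (- q k)) by (apply Rmult_le_compat_l; lra).
     lra. }
 assert (H1 := rsum_le_strict N (fun k => - a k) _ j Hbound Hj).
 unfold Dl. rewrite rsum_opp in H1. fold S in H1.
 assert (Hej : ce j * zv j * exp (- q j - zv j * x) = - b * exp (- zv j * x)).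
 { unfold b. replace (- q j - zv j * x) with (- q j + - zv j * x) by ring. rewrite exp_plus. ring. }
 assert (Hineq := exp_ineq1_le (- zv j * x)).
 assert (b * (1 + - zv j * x) <= b * exp (- zv j * x)) by (apply Rmult_le_compat_l; lra).
 assert (0 <= a j). { unfold a. assert (0 < exp (- q j)) by apply exp_pos. 
   assert (0 <= Rabs (zv j)) by apply Rabs_pos. assert (0 < ce j) by auto. apply Rmult_le_pos; [apply Rmult_le_pos|]; lra. }
 rewrite Hej in H1. nra.
Qed.

Lemma D_neg_sym N ce zv q x : Dl N ce (fun k => - zv k) q (- x) = - Dl N ce zv q x.
Proof. unfold Dl. rewrite <- rsum_opp. apply rsum_ext. intros k _.
 replace (- q k - - zv k * - x) with (- q k - zv k * x) by ring. ring. Qed.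

Lemma D_neg N ce zv q j : (forall k, (k < N)%nat -> 0 < ce k) -> (j < N)%nat -> 0 < zv j ->
  exists x, Dl N ce zv q x < 0.
Proof. intros Hce Hj Hz. destruct (D_pos N ce (fun k => - zv k) q j Hce Hj ltac:(lra)) as [x Hx].
 exists (- x). replace x with (- - x) in Hx by ring. rewrite D_neg_sym in Hx. lra. Qed.

Lemma pd_inj N (L : nat -> nat -> R) y :
  (forall x : nat -> R, (exists i, (i < N)%nat /\ x i <> 0) ->
           0 < rsum N (fun i => rsum N (fun j => x i * L i j * x j))) ->
  (forall i, (i < N)%nat -> rsum N (fun j => L i j * y j) = 0) ->
  forall j, (j < N)%nat -> y j = 0.
Proof. intros Lpd Hy j Hj. destruct (Req_dec (y j) 0) as [|Hne]; auto. exfalso.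
 assert (H := Lpd y (ex_intro _ j (conj Hj Hne))).
 assert (E : rsum N (fun i => rsum N (fun j => y i * L i j * y j)) = rsum N (fun i => 0)).
 { apply rsum_ext. intros i Hi. rewrite <- (Rmult_0_r (y i)), <- (Hy i Hi), <- rsum_scal.
   apply rsum_ext. intros; ring. }
 assert (rsum N (fun _ : nat => 0) = 0) by (clear; induction N; simpl; lra). lra. Qed.

Lemma steady_char N zv ce A z L p q c v phi :
  (forall k, (k < N)%nat -> 0 < ce k) -> 0 < A ->
  (forall x : nat -> R, (exists i, (i < N)%nat /\ x i <> 0) ->
           0 < rsum N (fun i => rsum N (fun j => x i * L i j * x j))) ->
  (forall i, (i < N)%nat -> rsum N (fun j => L i j * q j) = p i) ->
  steady_state N zv ce A z L p c v phi ->
  (forall k, (k < N)%nat -> c k = ce k * exp (- q k - zv k * phi)) /\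
  f_lin N ce zv q phi < 0 /\ A / v = - f_lin N ce zv q phi /\
  Dl N ce zv q phi + z * f_lin N ce zv q phi = 0.
Proof. intros Hce HA Lpd Hq [Hc [Hv [Hel [Hmu Hpi]]]].
 assert (Hy : forall j, (j < N)%nat -> mu ce zv c phi j + q j = 0).
 { apply (pd_inj N L _ Lpd). intros i Hi.
   rewrite (rsum_ext N _ (fun j => L i j * mu ce zv c phi j + L i j * q j)) by (intros; ring).
   rewrite rsum_plus, Hq by auto. apply Hmu; auto. }
 assert (Hck : forall k, (k < N)%nat -> c k = ce k * exp (- q k - zv k * phi)).
 { intros k Hk. specialize (Hy k Hk). unfold mu in Hy.
   assert (E : ln (c k / ce k) = - q k - zv k * phi) by lra.
   rewrite <- E, exp_ln. field. apply Rgt_not_eq, Hce; auto.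
   apply Rdiv_lt_0_compat; auto. }
 assert (Hsc : rsum N c = rsum N (fun k => ce k * exp (- q k - zv k * phi))) by (apply rsum_ext; auto).
 assert (Hf : f_lin N ce zv q phi = rsum N c - rsum N ce).
 { unfold f_lin. rewrite Hsc, <- rsum_minus. apply rsum_ext. intros; ring. }
 unfold pi_w in Hpi.
 assert (HAv : A / v = - f_lin N ce zv q phi) by lra.
 assert (0 < A / v) by (apply Rdiv_lt_0_compat; auto).
 repeat split; auto; try lra.
 assert (Hz : rsum N (fun k => zv k * c k) = - Dl N ce zv q phi).
 { unfold Dl. rewrite <- rsum_opp. apply rsum_ext. intros k Hk. rewrite Hck by auto. ring. }
 replace (z * A / v) with (z * (A / v)) in Hel by (unfold Rdiv; ring). rewrite Hz, HAv in Hel. nra.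
Qed.

Lemma steady_build N zv ce A z L p q phi :
  (forall k, (k < N)%nat -> 0 < ce k) -> 0 < A ->
  (forall i, (i < N)%nat -> rsum N (fun j => L i j * q j) = p i) ->
  f_lin N ce zv q phi < 0 -> Dl N ce zv q phi + z * f_lin N ce zv q phi = 0 ->
  steady_state N zv ce A z L p (fun k => ce k * exp (- q k - zv k * phi)) (- A / f_lin N ce zv q phi) phi.
Proof. intros Hce HA Hq Hf Hh. set (F := f_lin N ce zv q phi) in *.
 assert (HAv : A / (- A / F) = - F) by (field; lra).
 unfold steady_state. split; [|split; [|split; [|split]]].
 - intros k Hk. apply Rmult_lt_0_compat; [auto|apply exp_pos].
 - apply Rdiv_neg_neg; lra.
 - replace (z * A / (- A / F)) with (z * (A / (- A / F))) by (field; lra). rewrite HAv.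
   assert (rsum N (fun k => zv k * (ce k * exp (- q k - zv k * phi))) = - Dl N ce zv q phi).
   { unfold Dl. rewrite <- rsum_opp. apply rsum_ext. intros; ring. } lra.
 - intros i Hi. rewrite <- Hq by auto.
   rewrite (rsum_ext N _ (fun j => - (L i j * q j))). { rewrite rsum_opp. ring. }
   intros j Hj. unfold mu. replace (ce j * exp (- q j - zv j * phi) / ce j) with (exp (- q j - zv j * phi)).
   2:{ field. apply Rgt_not_eq, Hce; auto. } rewrite ln_exp. ring.
 - unfold pi_w. rewrite HAv. unfold F, f_lin.
   rewrite (rsum_ext N (fun k => ce k * (exp (- q k - zv k * phi) - 1))
     (fun k => ce k * exp (- q k - zv k * phi) - ce k)) by (intros; ring).
   rewrite rsum_minus. ring.
Qed.

Lemma signs N zv ce : (forall k, (k < N)%nat -> 0 < ce k) ->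
  rsum N (fun k => zv k * ce k) = 0 -> (exists k, (k < N)%nat /\ zv k <> 0) ->
  (exists i, (i < N)%nat /\ 0 < zv i) /\ (exists j, (j < N)%nat /\ zv j < 0).
Proof. intros Hce Hn [k0 [Hk0 Hz0]].
 assert (Hzero : rsum N (fun _ => 0) = 0) by (clear; induction N; simpl; lra).
 split.
 - destruct (classic (exists i, (i < N)%nat /\ 0 < zv i)) as [H|H]; auto. exfalso.
   assert (Hle : forall k, (k < N)%nat -> zv k * ce k <= 0).
   { intros k Hk. assert (zv k <= 0). { destruct (Rle_lt_dec (zv k) 0); auto. exfalso; apply H; eauto. }
     assert (0 < ce k) by auto. nra. }
   assert (H1 := rsum_le_strict N _ (fun _ => 0) k0 Hle Hk0). simpl in H1.
   assert (zv k0 < 0). { destruct (Rle_lt_dec (zv k0) 0); [lra|]. exfalso; apply H; eauto. }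
   assert (0 < ce k0) by auto. nra.
 - destruct (classic (exists i, (i < N)%nat /\ zv i < 0)) as [H|H]; auto. exfalso.
   assert (Hle : forall k, (k < N)%nat -> 0 <= zv k * ce k).
   { intros k Hk. assert (0 <= zv k). { destruct (Rle_lt_dec 0 (zv k)); auto. exfalso; apply H; eauto. }
     assert (0 < ce k) by auto. nra. }
   assert (H1 := rsum_le_strict N (fun _ => 0) _ k0 Hle Hk0). simpl in H1.
   assert (0 < zv k0). { destruct (Rle_lt_dec 0 (zv k0)); [lra|]. exfalso; apply H; eauto. }
   assert (0 < ce k0) by auto. nra.
Qed.

Lemma real_unique f1 f2 z d : 0 < d -> f1 < 0 -> f2 < 0 ->
  f2 > f1 * (1 - z * d) -> f1 > f2 * (1 + z * d) -> False.
Proof. intros Hd H1 H2 Ha Hb.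
 destruct (Rle_lt_dec 0 (1 + z * d)) as [Hc|Hc].
 - assert (f2 * (1 + z*d) >= f1 * (1 - z*d) * (1 + z*d)) by nra.
   assert (0 <= (z*d)*(z*d)) by nra. nra.
 - nra.
Qed.

Lemma h_unique N ce zv q z x y j : (forall k, (k < N)%nat -> 0 < ce k) ->
  (j < N)%nat -> zv j <> 0 ->
  f_lin N ce zv q x < 0 -> f_lin N ce zv q y < 0 ->
  Dl N ce zv q x + z * f_lin N ce zv q x = 0 -> Dl N ce zv q y + z * f_lin N ce zv q y = 0 -> x = y.
Proof. intros Hce Hj Hz.
 assert (gen : forall x y, x < y -> f_lin N ce zv q x < 0 -> f_lin N ce zv q y < 0 ->
  Dl N ce zv q x + z * f_lin N ce zv q x = 0 -> Dl N ce zv q y + z * f_lin N ce zv q y = 0 -> False).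
 { clear x y. intros x y Hxy Hx Hy Hhx Hhy.
   assert (T1 := tangent_strict N ce zv q x y j Hce Hj Hz ltac:(lra)).
   assert (T2 := tangent_strict N ce zv q y x j Hce Hj Hz ltac:(lra)).
   apply (real_unique (f_lin N ce zv q x) (f_lin N ce zv q y) z (y - x)); try lra.
   - replace (Dl N ce zv q x) with (- z * f_lin N ce zv q x) in T1 by lra. nra.
   - replace (Dl N ce zv q y) with (- z * f_lin N ce zv q y) in T2 by lra. nra. }
 intros Hx Hy Hhx Hhy. destruct (Rtotal_order x y) as [H|[H|H]]; auto; exfalso.
 - exact (gen x y H Hx Hy Hhx Hhy).
 - exact (gen y x H Hy Hx Hhy Hhx).
Qed.

Lemma crit N ce zv q lo hi : (forall k, (k < N)%nat -> 0 < ce k) ->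
  Dl N ce zv q lo < 0 -> 0 < Dl N ce zv q hi -> exists m, Dl N ce zv q m = 0.
Proof. intros Hce Hlo Hhi.
 assert (lo < hi). { destruct (Rtotal_order lo hi) as [H|[H|H]]; auto; subst; [lra|].
   assert (H1 := D_mono N ce zv q hi lo Hce H). lra. }
 destruct (IVT _ lo hi (D_cont N ce zv q) H Hlo Hhi) as [m [_ Hm]]. eauto. Qed.

Lemma far_right N ce zv q x : (forall k, (k < N)%nat -> 0 < ce k) -> 0 < Dl N ce zv q x ->
  exists y, x < y /\ 0 < f_lin N ce zv q y.
Proof. intros Hce Hx. set (D := Dl N ce zv q x) in *. set (F := f_lin N ce zv q x) in *.
 exists (x + (Rabs F + 1) / D). assert (0 <= Rabs F) by apply Rabs_pos.
 assert (0 < (Rabs F + 1) / D) by (apply Rdiv_lt_0_compat; lra). split; [lra|].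
 assert (T := tangent N ce zv q x (x + (Rabs F + 1) / D) Hce). fold D F in T.
 replace (D * (x + (Rabs F + 1) / D - x)) with (Rabs F + 1) in T by (field; lra).
 assert (- F <= Rabs F) by (rewrite <- Rabs_Ropp; apply RRle_abs). lra. Qed.

Lemma far_left N ce zv q x : (forall k, (k < N)%nat -> 0 < ce k) -> Dl N ce zv q x < 0 ->
  exists y, y < x /\ 0 < f_lin N ce zv q y.
Proof. intros Hce Hx. set (D := Dl N ce zv q x) in *. set (F := f_lin N ce zv q x) in *.
 exists (x + (Rabs F + 1) / D). assert (0 <= Rabs F) by apply Rabs_pos.
 assert ((Rabs F + 1) / D < 0) by (apply Rdiv_pos_neg; lra). split; [lra|].
 assert (T := tangent N ce zv q x (x + (Rabs F + 1) / D) Hce). fold D F in T.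
 replace (D * (x + (Rabs F + 1) / D - x)) with (Rabs F + 1) in T by (field; lra).
 assert (- F <= Rabs F) by (rewrite <- Rabs_Ropp; apply RRle_abs). lra. Qed.

Lemma h_exists N ce zv q z m lo hi j : (forall k, (k < N)%nat -> 0 < ce k) ->
  (j < N)%nat -> zv j <> 0 ->
  Dl N ce zv q lo < 0 -> 0 < Dl N ce zv q hi -> Dl N ce zv q m = 0 -> f_lin N ce zv q m < 0 ->
  exists s, f_lin N ce zv q s < 0 /\ Dl N ce zv q s + z * f_lin N ce zv q s = 0.
Proof. intros Hce Hj Hz Hlo Hhi Hm Hfm.
 set (f := f_lin N ce zv q) in *. set (D := Dl N ce zv q) in *.
 set (xr := Rmax hi m + 1).
 assert (Hxr : 0 < D xr). { assert (Hhx : hi < xr) by (unfold xr; generalize (Rmax_l hi m); lra).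
   assert (H := D_mono N ce zv q hi xr Hce Hhx). unfold D in *; lra. }
 destruct (far_right N ce zv q xr Hce Hxr) as [pb [Hpb Hfpb]].
 assert (Hmpb : m < pb) by (unfold xr in Hpb; generalize (Rmax_r hi m); lra).
 destruct (IVT f m pb (f_cont N ce zv q) Hmpb Hfm Hfpb) as [b [[Hb1 Hb2] Hfb]].
 assert (Hmb : m < b). { destruct Hb1 as [|E]; auto. subst. lra. }
 set (xl := Rmin lo m - 1).
 assert (Hxl : D xl < 0). { assert (Hlx : xl < lo) by (unfold xl; generalize (Rmin_l lo m); lra).
   assert (H0 := D_mono N ce zv q xl lo Hce Hlx). unfold D in *; lra. }
 destruct (far_left N ce zv q xl Hce Hxl) as [pa [Hpa Hfpa]].
 assert (Hpam : pa < m) by (unfold xl in Hpa; generalize (Rmin_r lo m); lra).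
 assert (Hcf : continuity (fun x => - f x)) by (apply (continuity_opp f), f_cont).
 destruct (IVT (fun x => - f x) pa m Hcf Hpam ltac:(cbv beta; unfold f in *; lra) ltac:(cbv beta; unfold f in *; lra)) as [a [[Ha1 Ha2] Hfa]].
 assert (Hfa' : f a = 0) by (cbv beta in Hfa; lra).
 assert (Ham : a < m). { destruct Ha2 as [|E]; auto. subst. lra. }
 assert (HDa : D a < 0). { assert (T := tangent N ce zv q a m Hce). fold f D in T. nra. }
 assert (HDb : 0 < D b). { assert (T := tangent N ce zv q b m Hce). fold f D in T. nra. }
 set (h := fun x => D x + z * f x).
 assert (Hch : continuity h).
 { apply (continuity_plus D (fun x => z * f x)); [apply D_cont|].
   apply (continuity_scal f z), f_cont. }
 destruct (IVT h a b Hch ltac:(lra) ltac:(unfold h; rewrite Hfa'; lra) ltac:(unfold h; rewrite Hfb; lra))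
   as [s [[Hs1 Hs2] Hhs]].
 assert (Has : a < s). { destruct Hs1 as [|E]; auto. subst. unfold h in Hhs. rewrite Hfa' in Hhs. lra. }
 assert (Hsb : s < b). { destruct Hs2 as [|E]; auto. subst. unfold h in Hhs. rewrite Hfb in Hhs. lra. }
 exists s. split; [|exact Hhs].
 assert (T1 := tangent_strict N ce zv q s a j Hce Hj Hz ltac:(lra)).
 assert (T2 := tangent_strict N ce zv q s b j Hce Hj Hz ltac:(lra)). fold f D in T1, T2.
 rewrite Hfa' in T1. rewrite Hfb in T2.
 assert (P1 : (f s + D s * (a - s)) * (b - s) < 0) by (apply Rmult_neg_pos; lra).
 assert (P2 : (f s + D s * (b - s)) * (s - a) < 0) by (apply Rmult_neg_pos; lra).
 nra.
Qed.

Theorem proposition2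
  (N : nat) (zv ce : nat -> R) (A z : R)
  (L : nat -> nat -> R) (p q : nat -> R) (zeta : R)
  (HN : (2 <= N)%nat)
  (Hz : exists k, (k < N)%nat /\ zv k <> 0)
  (Hce : forall k, (k < N)%nat -> 0 < ce k)
  (Hneutral : rsum N (fun k => zv k * ce k) = 0)
  (HA : 0 < A)
  (Hzeta : 0 < zeta)
  (Lsym : forall i j, (i < N)%nat -> (j < N)%nat -> L i j = L j i)
  (Lpd : forall x : nat -> R, (exists i, (i < N)%nat /\ x i <> 0) ->
           0 < rsum N (fun i => rsum N (fun j => x i * L i j * x j)))
  (Hq : forall i, (i < N)%nat -> rsum N (fun j => L i j * q j) = p i) :
  exists phimin : R,
    (forall phi, f_lin N ce zv q phimin <= f_lin N ce zv q phi) /\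
    (forall phi', (forall phi, f_lin N ce zv q phi' <= f_lin N ce zv q phi) ->
                  phi' = phimin) /\
    (f_lin N ce zv q phimin < 0 ->
       exists (c : nat -> R) (v phi : R),
         steady_state N zv ce A z L p c v phi /\
         forall (c' : nat -> R) (v' phi' : R),
           steady_state N zv ce A z L p c' v' phi' ->
           (forall k, (k < N)%nat -> c' k = c k) /\ v' = v /\ phi' = phi) /\
    (0 <= f_lin N ce zv q phimin ->
       forall (c : nat -> R) (v phi : R), ~ steady_state N zv ce A z L p c v phi).
Proof.
 destruct (signs N zv ce Hce Hneutral Hz) as [[i [Hi Hzi]] [j [Hj Hzj]]].
 destruct (D_neg N ce zv q i Hce Hi Hzi) as [lo Hlo].
 destruct (D_pos N ce zv q j Hce Hj Hzj) as [hi Hhi].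
 destruct (crit N ce zv q lo hi Hce Hlo Hhi) as [m Hm].
 assert (Hj0 : zv j <> 0) by lra.
 assert (Hmin : forall phi, f_lin N ce zv q m <= f_lin N ce zv q phi).
 { intros phi. assert (T := tangent N ce zv q m phi Hce). rewrite Hm in T. lra. }
 exists m. split; [exact Hmin|]. split.
 { intros phi' H'. destruct (Req_dec phi' m) as [|Hne]; auto. exfalso.
   assert (T := tangent_strict N ce zv q m phi' j Hce Hj Hj0 Hne). rewrite Hm in T.
   specialize (H' m). lra. }
 split.
 - intros Hfm.
   destruct (h_exists N ce zv q z m lo hi j Hce Hj Hj0 Hlo Hhi Hm Hfm) as [s [Hfs Hhs]].
   exists (fun k => ce k * exp (- q k - zv k * s)), (- A / f_lin N ce zv q s), s.
   split. { apply steady_build; auto. }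
   intros c' v' phi' Hss.
   destruct (steady_char N zv ce A z L p q c' v' phi' Hce HA Lpd Hq Hss) as [Hc [Hf' [HAv Hh']]].
   assert (E : phi' = s) by (apply (h_unique N ce zv q z phi' s j); auto).
   subst phi'. split; [exact Hc|]. split; [|reflexivity].
   destruct Hss as [_ [Hv _]].
   replace v' with (A / (A / v')) by (field; split; lra).
   rewrite HAv. field. lra.
 - intros Hfm c v phi Hss.
   destruct (steady_char N zv ce A z L p q c v phi Hce HA Lpd Hq Hss) as [_ [Hf _]].
   specialize (Hmin phi). lra.
Qed.
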